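(* Fix $m>0$ and $a\in\mathbb R$ with $|a|<m$, and consider the subextremal Kerr spacetime in Boyer--Lindquist coordinates $(t,r,\vartheta,\varphi)$ on the exterior region $r>r_+:=m+\sqrt{m^2-a^2}$, $$\mathfrak g_{m,a}=-\Big(1-\frac{2mr}{\rho^2}\Big)dt^2-\frac{4mar\sin^2\vartheta}{\rho^2}dt\,d\varphi+\frac{\rho^2}{\Delta}dr^2+\rho^2d\vartheta^2+\frac{\Lambda}{\rho^2}\sin^2\vartheta\,d\varphi^2,$$ with $\rho^2=r^2+a^2\cos^2\vartheta$, $\Delta=r^2-2mr+a^2$, $\Lambda=(r^2+a^2)^2-a^2\Delta\sin^2\vartheta$. Then each hypersurface $\{t=\mathrm{const},\ r>r_+\}$ is tangentially maximal; more precisely, the coordinate spheres $\{S_r\}_{r>r_+}$ form a TMCF foliation of each constant-$t$ exterior slice. Equivalently, every constant graph $f\equiv T_0$ solves the TMCF equation on the Kerr exterior.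
   Context: A foliation $\{S_r\}$ of a spacelike hypersurface $M$ (with second fundamental form $K$ in the spacetime) by closed spacelike surfaces is a TMCF foliation if the spacetime mean curvature vector of each leaf is tangent to $M$, equivalently $\mathrm{tr}_{S_r}K=0$ (the trace of $K$ over $TS_r$ with the induced metric) on every leaf; $M$ with such a foliation is called tangentially maximal. For a graph $t=f(r,\vartheta,\varphi)$, ''$f$ solves the TMCF equation'' means the spheres $\{r=\mathrm{const}\}$ of the graph form a TMCF foliation of the graph. *)

(* Defs.v *)
From Stdlib Require Import Reals Lra.
From Coquelicot Require Import Coquelicot.
Open Scope R_scope.

(** Spacetime coordinates x = (x 0, x 1, x 2, x 3) = (t, r, theta, phi).
    Only indices 0..3 are meaningful. *)
Definition point := nat -> R.

Definition upd (x : point) (k : nat) (s : R) : point :=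
  fun i => if Nat.eqb i k then s else x i.

Definition partial (k : nat) (F : point -> R) (x : point) : R :=
  Derive (fun s => F (upd x k s)) (x k).

Definition metric := nat -> nat -> point -> R.

Definition sum4 (f : nat -> R) : R := f 0%nat + f 1%nat + f 2%nat + f 3%nat.

(** Christoffel symbols of the first kind:
    Gamma_{nu, i j} = 1/2 (d_i g_{nu j} + d_j g_{nu i} - d_nu g_{i j}),
    so that g(nabla_{d_i} d_j, d_nu) = Gamma_{nu,ij}. *)
Definition Gamma1 (g : metric) (nu i j : nat) (x : point) : R :=
  / 2 * (partial i (g nu j) x + partial j (g nu i) x - partial nu (g i j) x).

Definition unit_normal_t_slice (g : metric) (x : point) (n : nat -> R) : Prop :=
  (forall i : nat, (1 <= i <= 3)%nat -> sum4 (fun mu => g mu i x * n mu) = 0) /\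
  sum4 (fun mu => sum4 (fun nu => g mu nu x * n mu * n nu)) = -1.

(** Second fundamental form of the slice {t = const} w.r.t. the normal n,
    on coordinate tangent vectors d_i, d_j (i, j in 1..3):
    K(d_i, d_j) = g(nabla_{d_i} n, d_j) = - g(n, nabla_{d_i} d_j). *)
Definition sff_t_slice (g : metric) (n : nat -> R) (i j : nat) (x : point) : R :=
  - sum4 (fun nu => n nu * Gamma1 g nu i j x).

(** Trace of K over T S_r = span(d_theta, d_phi) (indices 2, 3) with the
    induced metric sigma_{AB} = g_{AB}, A,B in {2,3}:
    tr_{S_r} K = sigma^{AB} K_{AB}, sigma^{-1} written out for 2x2. *)
Definition trace_Sr_K (g : metric) (n : nat -> R) (x : point) : R :=
  let s22 := g 2%nat 2%nat x in
  let s23 := g 2%nat 3%nat x in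
  let s33 := g 3%nat 3%nat x in
  let det := s22 * s33 - s23 * s23 in
  (s33 * sff_t_slice g n 2 2 x
   - s23 * sff_t_slice g n 2 3 x
   - s23 * sff_t_slice g n 3 2 x
   + s22 * sff_t_slice g n 3 3 x) / det.

Definition kerr_rho2 (a r th : R) : R := r ^ 2 + a ^ 2 * (cos th) ^ 2.
Definition kerr_Delta (m a r : R) : R := r ^ 2 - 2 * m * r + a ^ 2.
Definition kerr_Lambda (m a r th : R) : R :=
  (r ^ 2 + a ^ 2) ^ 2 - a ^ 2 * kerr_Delta m a r * (sin th) ^ 2.

Definition kerr_g (m a : R) : metric :=
  fun mu nu x =>
    let r := x 1%nat in
    let th := x 2%nat in
    let rho2 := kerr_rho2 a r th in
    match mu, nu return R with
    | 0, 0 => - (1 - 2 * m * r / rho2)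
    | 0, 3 | 3, 0 => - (2 * m * a * r * (sin th) ^ 2) / rho2
    | 1, 1 => rho2 / kerr_Delta m a r
    | 2, 2 => rho2
    | 3, 3 => kerr_Lambda m a r th * (sin th) ^ 2 / rho2
    | _, _ => 0
    end.

Definition kerr_rplus (m a : R) : R := m + sqrt (m ^ 2 - a ^ 2).

(* Main.v *)
Require Import Defs.
From Stdlib Require Import Reals Lra Psatz.
From Coquelicot Require Import Coquelicot.
Open Scope R_scope.

Theorem mainTheorem4 :
  forall (m a : R), 0 < m -> Rabs a < m ->
  forall (x : point) (n : nat -> R),
    kerr_rplus m a < x 1%nat ->
    0 < x 2%nat < PI ->
    unit_normal_t_slice (kerr_g m a) x n ->
    trace_Sr_K (kerr_g m a) n x = 0.
Proof.
  intros m a Hm Ha x n Hr Hth [Hn _].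
  set (r := x 1%nat) in *. set (th := x 2%nat) in *.
  assert (Ha2 : a ^ 2 < m ^ 2).
  { apply Rabs_def2 in Ha. nra. }
  assert (Hs := sqrt_pos (m ^ 2 - a ^ 2)).
  assert (Hs2 := sqrt_sqrt (m ^ 2 - a ^ 2) ltac:(lra)).
  unfold kerr_rplus in Hr.
  assert (Hr0 : 0 < r) by lra.
  assert (HD : 0 < kerr_Delta m a r).
  { unfold kerr_Delta. nra. }
  assert (Hrho : 0 < kerr_rho2 a r th).
  { unfold kerr_rho2. assert (0 <= a^2 * cos th ^ 2).
    { apply Rmult_le_pos; apply pow2_ge_0. } nra. }
  assert (H1 := Hn 1%nat ltac:(lia)).
  assert (H2 := Hn 2%nat ltac:(lia)).
  unfold sum4, kerr_g in H1, H2. simpl in H1, H2. fold r th in H1, H2.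
  assert (n1 : n 1%nat = 0).
  { assert (kerr_rho2 a r th / kerr_Delta m a r * n 1%nat = 0) by lra.
    apply Rmult_integral in H. destruct H as [H|H]; auto.
    exfalso. unfold Rdiv in H. apply Rmult_integral in H. destruct H as [H|H].
    lra. apply Rinv_neq_0_compat in H; lra. }
  assert (n2 : n 2%nat = 0).
  { assert (kerr_rho2 a r th * n 2%nat = 0) by lra.
    apply Rmult_integral in H. destruct H as [H|H]; lra. }
  unfold trace_Sr_K, sff_t_slice, sum4, Gamma1, partial, upd, kerr_g.
  cbn -[Derive kerr_rho2 kerr_Lambda kerr_Delta].
  rewrite n1, n2.
  rewrite !Derive_const.
  lra.
Qed.
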